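(* Let $M$ be a commutative semiring. Then $M$ is a semifield if and only if for every non-constant fuzzy ideal $\mu$ of $M$ one has $\mu(x)=\mu(y)<\mu(0)$ for all $x,y\in M\setminus\{0\}$.
   Context: Semirings are taken in the sense of Golan: $(M,+)$ is a commutative monoid with identity $0$, $(M,\cdot)$ is a monoid with identity $1\neq 0$, multiplication distributes over addition, and $0x=x0=0$. A semifield is a commutative semiring in which every nonzero element has a multiplicative inverse. A fuzzy ideal of $M$ is a map $\mu:M\to[0,1]$, not identically $0$, with $\mu(x+y)\ge\min[\mu(x),\mu(y)]$, $\mu(xy)\ge\mu(y)$ and $\mu(xy)\ge\mu(x)$ for all $x,y\in M$. Non-constant means not constant on $M$. *)

(* Defs.v *)
From HB Require Import structures.
From mathcomp Require Import all_boot all_algebra.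
From Stdlib Require Import Reals.
Set Implicit Arguments. Unset Strict Implicit. Unset Printing Implicit Defensive.
Import GRing.Theory.

(* A commutative semiring in Golan's sense (1 <> 0, 0 absorbing) is a
   MathComp comNzSemiRingType. *)

Definition is_semifield (M : comNzSemiRingType) : Prop :=
  forall x : M, x <> @GRing.zero M -> exists y : M, GRing.mul x y = @GRing.one M.

Definition fuzzy_ideal (M : comNzSemiRingType) (mu : M -> R) : Prop :=
  (forall x, Rle R0 (mu x) /\ Rle (mu x) R1) /\
  (exists x, mu x <> R0) /\
  (forall x y, Rle (Rmin (mu x) (mu y)) (mu (GRing.add x y))) /\
  (forall x y, Rle (mu y) (mu (GRing.mul x y))) /\
  (forall x y, Rle (mu x) (mu (GRing.mul x y))).

Definition non_constant (M : Type) (mu : M -> R) : Prop :=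
  exists x y, mu x <> mu y.

(* Main.v *)
Require Import Defs.
From mathcomp Require Import all_boot all_algebra.
From Stdlib Require Import Reals Lra Classical ClassicalDescription.
Import GRing.Theory.

Theorem theorem3p9 (M : comNzSemiRingType) :
  is_semifield M <->
  (forall mu : M -> R, fuzzy_ideal mu -> non_constant mu ->
     forall x y : M, x <> @GRing.zero M -> y <> @GRing.zero M ->
       mu x = mu y /\ Rlt (mu y) (mu (@GRing.zero M))).
Proof.
split.
- move=> Hsf mu [_ [_ [_ [_ Hm]]]] [a [b Hab]].
  have Hle : forall u v : M, u <> (@GRing.zero M) -> v <> (@GRing.zero M) -> Rle (mu u) (mu v).
    move=> u v Hu Hv; have [ui Hui] := Hsf u Hu.
    have := Hm u (GRing.mul ui v); by rewrite mulrA Hui mul1r.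
  have H0 : forall u : M, Rle (mu u) (mu (@GRing.zero M)).
    move=> u; have := Hm u (@GRing.zero M); by rewrite mulr0.
  move=> x y Hx Hy; split; first by apply: Rle_antisym; apply: Hle.
  case: (H0 y) => // Heq; exfalso; apply: Hab.
  have Hall : forall z : M, mu z = mu (@GRing.zero M).
    move=> z; case: (eqVneq z (@GRing.zero M)) => [->|/eqP Hz] //.
    rewrite -Heq; apply: Rle_antisym; apply: Hle => //.
  by rewrite !Hall.
- move=> H x Hx; apply: NNPP => Hnx.
  pose mu := fun z : M => if excluded_middle_informative (exists m, z = GRing.mul x m) then R1 else R0.
  have Hx1 : mu x = R1.
    rewrite /mu; case: excluded_middle_informative => [//|Hn]; exfalso; apply: Hn; exists (@GRing.one M); by rewrite mulr1.
  have H1 : mu (@GRing.one M) = R0.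
    rewrite /mu; case: excluded_middle_informative => [[m Hm]|//].
    by exfalso; apply: Hnx; exists m.
  have Hfi : fuzzy_ideal mu.
    split; [|split; [|split; [|split]]].
    + move=> z; rewrite /mu; destruct excluded_middle_informative; split; [apply: Rle_0_1|apply: Rle_refl|apply: Rle_refl|apply: Rle_0_1].
    + exists x; rewrite Hx1; lra.
    + move=> u v; rewrite /mu.
      destruct (excluded_middle_informative (exists m, u = GRing.mul x m)) as [[m1 Hu]|Hu];
      destruct (excluded_middle_informative (exists m, v = GRing.mul x m)) as [[m2 Hv]|Hv];
      destruct excluded_middle_informative as [Hs|Hs];
      try (unfold Rmin; destruct Rle_dec; lra).
      all: simpl.
      all: try (unfold Rmin; destruct Rle_dec; lra).
      exfalso; apply: Hs; exists (GRing.add m1 m2); by rewrite mulrDr Hu Hv.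
    + move=> u v; rewrite /mu.
      destruct (excluded_middle_informative (exists m, v = GRing.mul x m)) as [[m Hv]|Hv];
      destruct excluded_middle_informative as [Hs|Hs]; simpl; try lra.
      exfalso; apply: Hs; exists (GRing.mul u m); by rewrite Hv mulrCA.
    + move=> u v; rewrite /mu.
      destruct (excluded_middle_informative (exists m, u = GRing.mul x m)) as [[m Hu]|Hu];
      destruct excluded_middle_informative as [Hs|Hs]; simpl; try lra.
      exfalso; apply: Hs; exists (GRing.mul m v); by rewrite Hu mulrA.
  have Hnc : non_constant mu.
    exists x, (@GRing.one M); rewrite Hx1 H1; lra.
  have [Heq _] := H mu Hfi Hnc x (@GRing.one M) Hx (fun e => (negP (oner_neq0 M)) (introT eqP e)).
  move: Heq; rewrite Hx1 H1; lra.
Qed.
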